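(* Let $n\geq 3$, $d\geq 2$ and $T\geq 1$ be integers, and let $\Phi_T:\mathbb{R}^{d\times n}\to\mathbb{R}^m$ be a 1-WL geometric model (as defined in the context) in which all the functions $\phi_t,\psi_t$ and $\mathrm{ReadOut}$ are upper Lipschitz. Then $\Phi_T$ is not lower Lipschitz with respect to $d_{\mathcal{G}_{\pm}}$; that is, there is no $c>0$ such that $c\, d_{\mathcal{G}_{\pm}}({X},{Y})\leq\|\Phi_T({X})-\Phi_T({Y})\|_2$ for all ${X},{Y}\in\mathbb{R}^{d\times n}$.
   Context: A point set is ${X}\in\mathbb{R}^{d\times n}$ with columns $x_1,\dots,x_n\in\mathbb{R}^d$. A 1-WL geometric model with $T$ iterations is defined as follows: set $c_i^0=0$ for all $i\in[n]$, and for $t=0,\dots,T-1$, $$c_i^{t+1}=\phi_t\Big(c_i^t,\ \psi_t\big(\{\!\{(c_i^t,c_j^t,\|x_i-x_j\|_2)\mid j\in[n]\}\!\}\big)\Big),$$ and finally $\Phi_T({X})=\mathrm{ReadOut}(\{\!\{c_1^T,\dots,c_n^T\}\!\})$. Here $\phi_t$ are functions between Euclidean spaces, and $\psi_t$, $\mathrm{ReadOut}$ are multiset functions, i.e. functions of a matrix whose columns are the multiset elements, invariant to permuting these columns; Lipschitzness of a multiset function means Lipschitzness of this matrix function in the Euclidean sense. The Procrustes Matching metric is $$d_{\mathcal{G}_{\pm}}({X},{Y})=\Big[\min_{(\pi,R,t)\in S_n\times O(d)\times\mathbb{R}^d}\sum_{j=1}^n\|x_j-Ry_{\pi(j)}+t\|_2^2\Big]^{1/2}.$$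 *)

(* Defs.v *)
From HB Require Import structures.
From mathcomp Require Import all_boot all_order all_algebra perm.
From mathcomp Require Import classical_sets reals.
Set Implicit Arguments. Unset Strict Implicit. Unset Printing Implicit Defensive.
Import Order.TTheory GRing.Theory Num.Theory.
Local Open Scope ring_scope.

Definition fnorm (R : realType) (p q : nat) (A : 'M[R]_(p, q)) : R :=
  Num.sqrt (\sum_(i < p) \sum_(j < q) A i j ^+ 2).

Definition upper_lipschitz (R : realType) (p q r s : nat)
    (f : 'M[R]_(p, q) -> 'M[R]_(r, s)) : Prop :=
  exists L : R, forall x y, fnorm (f x - f y) <= L * fnorm (x - y).

(* Multiset function: function of a matrix whose columns are the multiset
   elements, invariant under permuting the columns. *)
Definition multiset_fun (R : realType) (p n r s : nat)
    (f : 'M[R]_(p, n) -> 'M[R]_(r, s)) : Prop :=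
  forall (sg : 'S_n) (M : 'M[R]_(p, n)), f (col_perm sg M) = f M.

Definition wl_msgs (R : realType) (d n k : nat) (X : 'M[R]_(d, n))
    (C : 'M[R]_(k, n)) (i : 'I_n) : 'M[R]_(k + k + 1, n) :=
  \matrix_(r, j) (col_mx (col_mx (col i C) (col j C))
                         ((fnorm (col i X - col j X))%:M : 'M[R]_(1, 1))) r ord0.

(* Colours c^t, stored as the matrix whose i-th column is c_i^t. *)
Fixpoint wl_colors (R : realType) (d n : nat) (ks es : nat -> nat)
    (phi : forall t, 'cV[R]_(ks t + es t) -> 'cV[R]_(ks t.+1))
    (psi : forall t, 'M[R]_(ks t + ks t + 1, n) -> 'cV[R]_(es t))
    (X : 'M[R]_(d, n)) (t : nat) : 'M[R]_(ks t, n) :=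
  match t with
  | 0 => 0
  | t'.+1 =>
      let C := wl_colors phi psi X t' in
      \matrix_(r, i) (phi t' (col_mx (col i C) (psi t' (wl_msgs X C i)))) r ord0
  end.

Definition wl_model (R : realType) (d n m T : nat) (ks es : nat -> nat)
    (phi : forall t, 'cV[R]_(ks t + es t) -> 'cV[R]_(ks t.+1))
    (psi : forall t, 'M[R]_(ks t + ks t + 1, n) -> 'cV[R]_(es t))
    (readout : 'M[R]_(ks T, n) -> 'cV[R]_m)
    (X : 'M[R]_(d, n)) : 'cV[R]_m :=
  readout (wl_colors phi psi X T).

(* Procrustes matching metric (the min is written as an infimum). *)
Definition procrustes_dist (R : realType) (d n : nat)
    (X Y : 'M[R]_(d, n)) : R :=
  Num.sqrt (inf [set v : R | exists (sg : 'S_n) (Q : 'M[R]_d) (tv : 'cV[R]_d),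
     Q^T *m Q = 1%:M /\
     v = \sum_(j < n) fnorm (col j X - Q *m col (sg j) Y + tv) ^+ 2]%classic).

(* Main.v *)
Require Import Defs.
From HB Require Import structures.
From mathcomp Require Import all_boot all_order all_algebra perm.
From mathcomp Require Import classical_sets reals.
Import Order.TTheory GRing.Theory Num.Theory.
Local Open Scope ring_scope.
From mathcomp Require Import ring lra.
Set Implicit Arguments. Unset Strict Implicit.

Section H.
Variable R : realType.

Definition EB p q (M : 'M[R]_(p, q)) (b : R) := forall i j, `|M i j| <= b.

Lemma fnorm_ge0 p q (M : 'M[R]_(p,q)) : 0 <= fnorm M.
Proof. exact: sqrtr_ge0. Qed.

Lemma sum_sq_ge0 p q (M : 'M[R]_(p,q)) : 0 <= \sum_(i < p) \sum_(j < q) M i j ^+ 2.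
Proof. by apply: sumr_ge0 => i _; apply: sumr_ge0 => j _; exact: sqr_ge0. Qed.

Lemma entry_le_fnorm p q (M : 'M[R]_(p,q)) i j : `|M i j| <= fnorm M.
Proof.
rewrite /fnorm -sqrtr_sqr ler_sqrt; last exact: sum_sq_ge0.
rewrite (bigD1 i) //= (bigD1 j) //= -addrA lerDl.
apply: addr_ge0; first by apply: sumr_ge0 => k _; exact: sqr_ge0.
by apply: sumr_ge0 => k _; apply: sumr_ge0 => l _; exact: sqr_ge0.
Qed.

Lemma EB_fnorm p q (M : 'M[R]_(p,q)) b : EB M b -> 0 <= b -> fnorm M <= (p * q)%:R * b.
Proof.
move=> H b0.
rewrite /fnorm -(ger0_norm (x := (p*q)%:R * b)) ?mulr_ge0 // -sqrtr_sqr ler_sqrt; last exact: sqr_ge0.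
apply: (@le_trans _ _ (\sum_(i < p) \sum_(j < q) b ^+ 2)).
  apply: ler_sum => i _; apply: ler_sum => j _.
  rewrite -real_normK ?num_real //; apply: lerXn2r => //; rewrite ?nnegrE //.
rewrite !sumr_const !card_ord -mulr_natr -mulrnA -mulr_natr exprMn.
rewrite !mul1r -[X in X <= _]mulr_natr; rewrite [X in _ <= X]mulrC; apply: (ler_wpM2l (sqr_ge0 b)).
rewrite mulnC -natrX ler_nat.
by case: (p * q)%N => // k; rewrite expnS leq_pmulr.
Qed.

Lemma lip_EB p q r s (f : 'M[R]_(p,q) -> 'M[R]_(r,s)) :
  upper_lipschitz f -> exists K, 0 <= K /\ forall x y b, EB (x - y) b -> 0 <= b -> EB (f x - f y) (K * b).
Proof.
case=> L HL; exists (`|L| * (p*q)%:R); split; first by rewrite mulr_ge0.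
move=> x y b H b0 i j; apply: le_trans (entry_le_fnorm _ i j) _.
apply: le_trans (HL x y) _.
apply: le_trans (_ : `|L| * fnorm (x - y) <= _).
  by apply: ler_wpM2r; [exact: fnorm_ge0 | exact: ler_norm].
by rewrite -mulrA ler_wpM2l // EB_fnorm.
Qed.

Lemma EB_le p q (M : 'M[R]_(p,q)) b b' : EB M b -> b <= b' -> EB M b'.
Proof. by move=> H h i j; apply: le_trans (H i j) h. Qed.

Lemma EB_col_mx p1 p2 q (A A' : 'M[R]_(p1,q)) (B B' : 'M[R]_(p2,q)) b :
  EB (A - A') b -> EB (B - B') b -> EB (col_mx A B - col_mx A' B') b.
Proof.
move=> HA HB; rewrite opp_col_mx add_col_mx => i j.
by rewrite -[i]splitK; case: (split i) => k /=; rewrite ?col_mxEu ?col_mxEd.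
Qed.

Lemma subE p q (A B : 'M[R]_(p,q)) i j : (A - B) i j = A i j - B i j.
Proof. by rewrite !mxE. Qed.

Lemma msgE d n k (X : 'M[R]_(d,n)) (C : 'M[R]_(k,n)) i a j :
  wl_msgs X C i a j = col_mx (col_mx (col i C) (col j C))
                         ((fnorm (col i X - col j X))%:M : 'M[R]_(1, 1)) a ord0.
Proof. by rewrite /wl_msgs !mxE. Qed.

Lemma colors_EB d n (ks es : nat -> nat)
    (phi : forall t, 'cV[R]_(ks t + es t) -> 'cV[R]_(ks t.+1))
    (psi : forall t, 'M[R]_(ks t + ks t + 1, n) -> 'cV[R]_(es t)) :
  (forall t, upper_lipschitz (phi t)) -> (forall t, upper_lipschitz (psi t)) ->
  forall t, exists K, 0 <= K /\ forall (X Y : 'M[R]_(d,n)) dl, 0 <= dl ->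
   (forall i j, `|fnorm (col i X - col j X) - fnorm (col i Y - col j Y)| <= dl) ->
   EB (wl_colors phi psi X t - wl_colors phi psi Y t) (K * dl).
Proof.
move=> Hphi Hpsi; elim => [|t [K [K0 IH]]].
  by exists 0; split => // X Y dl _ _ i j; rewrite /= subrr mxE normr0 mul0r.
have [Kf [Kf0 Hf]] := lip_EB (Hphi t); have [Kp [Kp0 Hp]] := lip_EB (Hpsi t).
exists (Kf * (K + Kp * (K+1))); split.
  by rewrite mulr_ge0 // addr_ge0 // mulr_ge0 // addr_ge0.
move=> X Y dl dl0 Hd r i /=; rewrite !mxE.
set CX := wl_colors phi psi X t; set CY := wl_colors phi psi Y t.
have HC : EB (CX - CY) (K * dl) by exact: IH.
have Hb : EB (col_mx (col i CX) (psi t (wl_msgs X CX i)) -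
              col_mx (col i CY) (psi t (wl_msgs Y CY i))) ((K + Kp * (K+1)) * dl).
  apply: EB_col_mx.
    move=> a b; rewrite subE !mxE; have := HC a i; rewrite subE => h.
    apply: le_trans h _; apply: ler_wpM2r => //; rewrite lerDl mulr_ge0 // addr_ge0 //.
  apply: (@EB_le _ _ _ (Kp * ((K+1)*dl))); last first.
    by rewrite mulrA [X in _ <= X]mulrDl lerDr mulr_ge0.
  apply: Hp; last by rewrite mulr_ge0 // addr_ge0.
  move=> a j; rewrite subE !msgE -subE.
    apply: EB_col_mx; [apply: EB_col_mx|].
    - move=> a' b'; rewrite subE !mxE; have := HC a' i; rewrite subE => h.
      by apply: le_trans h _; apply: ler_wpM2r => //; rewrite lerDl.
    - move=> a' b'; rewrite subE !mxE; have := HC a' j; rewrite subE => h.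
      by apply: le_trans h _; apply: ler_wpM2r => //; rewrite lerDl.
    - move=> a' b'; rewrite subE !ord1 !mxE /= !mulr1n.
      by apply: le_trans (Hd i j) _; rewrite mulrDl mul1r lerDr mulr_ge0.
have := Hf _ _ _ Hb _ r ord0; rewrite subE mulrA; apply.
by rewrite mulr_ge0 // addr_ge0 // mulr_ge0 // addr_ge0.
Qed.

Definition pt (j : nat) : R := if j == 0%N then -1 else if j == 1%N then 0 else 1.
Definition ind (e : R) (j : nat) : R := if j == 1%N then e else 0.
Definition Xm d n : 'M[R]_(d, n) := \matrix_(r, j) (if (r == 0 :> nat) then pt j else 0).
Definition Ym d n (e : R) : 'M[R]_(d, n) :=
  \matrix_(r, j) (if (r == 0 :> nat) then pt j else if (r == 1 :> nat) then ind e j else 0).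

Lemma pt_sq j : j != 1%N -> pt j ^+ 2 = 1.
Proof. by rewrite /pt; case: ifP => _; [rewrite sqrrN expr1n | move/negbTE ->; rewrite expr1n]. Qed.

Lemma sum2 d' (v : 'cV[R]_(d'.+2)) :
  (forall r : 'I_d'.+2, (2 <= r)%N -> v r ord0 = 0) ->
  \sum_(r < d'.+2) \sum_(c < 1) v r c ^+ 2 = v ord0 ord0 ^+ 2 + v (lift ord0 ord0) ord0 ^+ 2.
Proof.
move=> H; rewrite big_ord_recl [X in _ + X]big_ord_recl !big_ord1 [X in _ + (_ + X)]big1 ?addr0 //.
by move=> k _; rewrite big_ord1 H ?expr0n.
Qed.

Lemma sqrt_bound (a s e : R) : 0 <= e -> (s = 0 \/ (a ^+ 2 = 1 /\ s ^+ 2 = e ^+ 2)) ->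
  `|Num.sqrt (a ^+ 2 + 0 ^+ 2) - Num.sqrt (a ^+ 2 + s ^+ 2)| <= e ^+ 2.
Proof.
move=> e0 [->|[-> ->]]; first by rewrite subrr normr0 sqr_ge0.
rewrite expr0n addr0 sqrtr1.
have h1 : 1 <= Num.sqrt (1 + e ^+ 2).
  by rewrite -{1}sqrtr1 ler_sqrt ?lerDl ?addr_ge0 ?sqr_ge0.
have h2 : Num.sqrt (1 + e ^+ 2) <= 1 + e ^+ 2.
  rewrite -{2}(@ger0_norm _ (1 + e ^+ 2)) ?addr_ge0 ?sqr_ge0 // -sqrtr_sqr ler_sqrt ?sqr_ge0 //.
  have := sqr_ge0 e; set x := e ^+ 2 => hx; nra.
rewrite ler_norml; apply/andP; split; lra.
Qed.

Lemma dist_bound d' n (e : R) (i j : 'I_n) : 0 <= e ->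
  `|fnorm (col i (Xm d'.+2 n) - col j (Xm d'.+2 n)) - fnorm (col i (Ym d'.+2 n e) - col j (Ym d'.+2 n e))| <= e ^+ 2.
Proof.
move=> e0; rewrite /fnorm !sum2; first last.
- by move=> r hr; rewrite !mxE; case: r hr => [[|[|r]]] //= _ _; rewrite subrr.
- by move=> r hr; rewrite !mxE; case: r hr => [[|[|r]]] //= _ _; rewrite subrr.
rewrite !mxE /= subrr.
apply: sqrt_bound => //.
rewrite /ind; case: (eqVneq (i : nat) 1%N) => hi; case: (eqVneq (j : nat) 1%N) => hj.
- by left; rewrite subrr.
- right; split; last by rewrite subr0.
  by rewrite {1}/pt hi /= sub0r sqrrN pt_sq.
- right; split; last by rewrite sub0r sqrrN.
  by rewrite [pt j]/pt hj /= subr0 pt_sq.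
- by left; rewrite subrr.
Qed.

Lemma addE p q (A B : 'M[R]_(p,q)) i j : (A + B) i j = A i j + B i j.
Proof. by rewrite !mxE. Qed.

Lemma QY d' n (e : R) (Q : 'M[R]_(d'.+2)) r (k : 'I_n) :
  (Q *m col k (Ym d'.+2 n e)) r ord0 = Q r ord0 * pt k + Q r (lift ord0 ord0) * ind e k.
Proof.
rewrite !mxE big_ord_recl [X in _ + X]big_ord_recl big1 ?addr0; first by rewrite !mxE.
by move=> s _; rewrite !mxE !lift0 /= mulr0.
Qed.

Lemma sq_sum_ge p (F : 'I_p -> R) (P : pred 'I_p) :
  (forall i, 0 <= F i) -> \sum_(i < p | P i) F i <= \sum_(i < p) F i.
Proof.
move=> H; rewrite [X in _ <= X](bigID P) /= lerDl; exact: sumr_ge0.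
Qed.

Lemma lower d' n' (e : R) (sg : 'S_(n'.+3)) (Q : 'M[R]_(d'.+2)) (tv : 'cV[R]_(d'.+2)) :
  0 <= e -> e <= 1 -> Q^T *m Q = 1%:M ->
  (2/3) * e ^+ 2 <= \sum_(j < n'.+3)
     fnorm (col j (Xm d'.+2 n'.+3) - Q *m col (sg j) (Ym d'.+2 n'.+3 e) + tv) ^+ 2.
Proof.
move=> e0 e1 HQ.
pose g (r : 'I_d'.+2) (k : 'I_n'.+3) :=
  Q r ord0 * pt k + Q r (lift ord0 ord0) * ind e k - tv r ord0.
pose G k := \sum_(k' < d'.+1) g (lift ord0 k') k ^+ 2.
have G0 k : 0 <= G k by apply: sumr_ge0 => i _; exact: sqr_ge0.
have step1 j : G (sg j) <=
    fnorm (col j (Xm d'.+2 n'.+3) - Q *m col (sg j) (Ym d'.+2 n'.+3 e) + tv) ^+ 2.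
  rewrite /fnorm sqr_sqrtr ?sum_sq_ge0 //.
  under eq_bigr do rewrite big_ord1.
  rewrite big_ord_recl -[G _]add0r; apply: lerD; first exact: sqr_ge0.
  apply: ler_sum => k _ ; rewrite addE subE QY !mxE !lift0 /= /g.
  by rewrite le_eqVlt; apply/orP; left; apply/eqP; ring.
have step2 : \sum_(j < n'.+3) G (sg j) = \sum_(j < n'.+3) G j.
  by symmetry; exact: (reindex_inj (@perm_inj _ sg)).
apply: le_trans (ler_sum _ (fun j _ => step1 j)); rewrite step2.
rewrite big_ord_recl [X in _ + X]big_ord_recl [X in _ + (_ + X)]big_ord_recl.
apply: le_trans (_ : G ord0 + (G (lift ord0 ord0) + G (lift ord0 (lift ord0 ord0))) <= _); last first.
  by rewrite !addrA lerDl sumr_ge0.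
rewrite /G -!big_split /=.
have hc c : \sum_(r < d'.+2) Q r c ^+ 2 = 1.
  transitivity ((Q^T *m Q) c c); last by rewrite HQ mxE eqxx.
  by rewrite mxE; apply: eq_bigr => r _; rewrite mxE expr2.
have hr : \sum_(s < d'.+2) Q ord0 s ^+ 2 = 1.
  transitivity ((Q *m Q^T) ord0 ord0); last by rewrite (mulmx1C HQ) mxE eqxx.
  by rewrite mxE; apply: eq_bigr => r _; rewrite mxE expr2.
have hr2 : Q ord0 ord0 ^+ 2 + Q ord0 (lift ord0 ord0) ^+ 2 <= 1.
  rewrite -hr big_ord_recl big_ord_recl addrA lerDl.
  by apply: sumr_ge0 => i _; exact: sqr_ge0.
have hs : 1 <= \sum_(k' < d'.+1) (Q (lift ord0 k') ord0 ^+ 2 + Q (lift ord0 k') (lift ord0 ord0) ^+ 2).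
  rewrite big_split /=.
  have := hc ord0; have := hc (lift ord0 ord0); rewrite !big_ord_recl => h1 h2.
  lra.
apply: le_trans (_ : (2/3) * e ^+ 2 * \sum_(k' < d'.+1) (Q (lift ord0 k') ord0 ^+ 2 + Q (lift ord0 k') (lift ord0 ord0) ^+ 2) <= _).
  rewrite -[X in X <= _]mulr1; apply: ler_wpM2l => //.
  by rewrite mulr_ge0 ?sqr_ge0 ?divr_ge0 ?ler0n.
rewrite mulr_sumr; apply: ler_sum => k _.
rewrite /g /pt /ind !lift0 /=.
set a := Q (lift ord0 k) ord0; set b := Q (lift ord0 k) (lift ord0 ord0); set t := tv (lift ord0 k) ord0.
have ha := sqr_ge0 a; have hb := sqr_ge0 b; have he : e ^+ 2 <= 1 by rewrite expr_le1.
have := sqr_ge0 (t - e * b / 3); have := sqr_ge0 (e * b).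
nra.
Qed.
End H.
Unset Implicit Arguments.



Theorem corollary1 (R : realType) (n d T m : nat) (ks es : nat -> nat)
    (phi : forall t, 'cV[R]_(ks t + es t) -> 'cV[R]_(ks t.+1))
    (psi : forall t, 'M[R]_(ks t + ks t + 1, n) -> 'cV[R]_(es t))
    (readout : 'M[R]_(ks T, n) -> 'cV[R]_m) :
  (3 <= n)%N -> (2 <= d)%N -> (1 <= T)%N ->
  (forall t, multiset_fun (psi t)) ->
  multiset_fun readout ->
  (forall t, upper_lipschitz (phi t)) ->
  (forall t, upper_lipschitz (psi t)) ->
  upper_lipschitz readout ->
  ~ (exists c : R, 0 < c /\
       forall X Y : 'M[R]_(d, n),
         c * procrustes_dist X Y <=
         fnorm (wl_model phi psi readout X - wl_model phi psi readout Y)).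
Proof.
Proof.
move=> hn hd hT _ _ Hphi Hpsi Hread [c [c0 Hc]].
have [n' En] : exists n', n = n'.+3 by exists (n - 3)%N; rewrite -addn3 subnK.
have [d' Ed] : exists d', d = d'.+2 by exists (d - 2)%N; rewrite -addn2 subnK.
subst n d.
have [K [K0 HK]] := @colors_EB R d'.+2 n'.+3 ks es phi psi Hphi Hpsi T.
have [Kr [Kr0 Hr]] := lip_EB Hread.
pose A := (m * 1)%:R * (Kr * K).
have A0 : 0 <= A by rewrite /A !mulr_ge0 // ler0n.
pose e := Num.min 1 (c / (2 * (A + 1))).
have hA1 : 0 < 2 * (A + 1) by rewrite mulr_gt0 // ltr_wpDl.
have e0 : 0 < e by rewrite lt_min ltr01 divr_gt0.
have e1 : e <= 1 by rewrite ge_min lexx.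
have e2 : e * (2 * (A + 1)) <= c by rewrite -ler_pdivlMr // ge_min lexx orbT.
have Hup : fnorm (wl_model phi psi readout (Xm R d'.+2 n'.+3) - wl_model phi psi readout (Ym d'.+2 n'.+3 e))
           <= A * e ^+ 2.
  rewrite /wl_model /A -!mulrA; apply: EB_fnorm; last by apply: mulr_ge0 => //; apply: mulr_ge0 => //; exact: sqr_ge0.
  apply: Hr; last by apply: mulr_ge0 => //; exact: sqr_ge0.
  apply: HK; first exact: sqr_ge0.
  by move=> i j; apply: dist_bound; exact: ltW.
have Hlow : e / 2 <= procrustes_dist (Xm R d'.+2 n'.+3) (Ym d'.+2 n'.+3 e).
  rewrite /procrustes_dist.
  match goal with |- context [inf ?S0] => set S := S0 end.
  have hS : (2/3) * e ^+ 2 <= inf S.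
    apply: lb_le_inf.
      exists (\sum_(j < n'.+3) fnorm (col j (Xm R d'.+2 n'.+3) - 1%:M *m col ((1%g : 'S_(n'.+3)) j) (Ym d'.+2 n'.+3 e) + 0) ^+ 2).
      by exists 1%g, 1%:M, 0; split; [rewrite trmx1 mul1mx|].
    move=> v [sg [Q [tv [HQ ->]]]]; apply: lower => //; exact: ltW.
  rewrite -(@ger0_norm _ (e / 2)); last by rewrite divr_ge0 // ltW.
  rewrite -sqrtr_sqr ler_sqrt; last first.
    by apply: le_trans hS; rewrite mulr_ge0 ?sqr_ge0 ?divr_ge0 ?ler0n.
  apply: le_trans hS.
  have := sqr_ge0 e; rewrite expr_div_n; set x := e ^+ 2 => hx; lra.
have := Hc (Xm R d'.+2 n'.+3) (Ym d'.+2 n'.+3 e).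
move=> H; have H1 : c * (e / 2) <= A * e ^+ 2.
  apply: le_trans Hup; apply: le_trans H; apply: ler_wpM2l => //; exact: ltW.
have H2 : c <= 2 * A * e.
  rewrite -(@ler_pM2r _ e) //; rewrite expr2 in H1; nra.
nra.
Qed.
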